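(* Let $I\subset\mathbb{N}$ be finite, let $G_1,G_2$ be groups, and for each $i\in I$ let $K_{1_i}\le G_1$ and $K_{2_i}\le G_2$. If $(G_1,(K_{1_i})_{i\in I})$ and $(G_2,(K_{2_i})_{i\in I})$ are subgroup geometry systems, then so is $(G_1\times G_2,(K_{1_i}\times K_{2_i})_{i\in I})$.
   Context: For a group $G$ with subgroups $(K_{\{i\}})_{i\in I}$, put $K_\tau=\bigcap_{i\in\tau}K_{\{i\}}$ for $\emptyset\ne\tau\subseteq I$ and $K_\emptyset=G$. $(G,(K_{\{i\}})_{i\in I})$ is a subgroup geometry system if: (A1) for all $\tau,\tau'\subseteq I$, $K_{\tau\cap\tau'}=\langle K_\tau,K_{\tau'}\rangle$; (A2) for every $\tau\subsetneq I$ and $i\in I\setminus\tau$, $K_\tau K_{\{i\}}=\bigcap_{j\in\tau}K_{\{j\}}K_{\{i\}}$; (A3) for every $i\in I$, $K_I\ne K_{I\setminus\{i\}}$. *)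

(* Defs.v *)
From Stdlib Require Import List.

Record Group := {
  carrier :> Type;
  gmul : carrier -> carrier -> carrier;
  gone : carrier;
  ginv : carrier -> carrier;
  gmul_assoc : forall x y z, gmul x (gmul y z) = gmul (gmul x y) z;
  gmul_1l : forall x, gmul gone x = x;
  gmul_1r : forall x, gmul x gone = x;
  gmul_Vl : forall x, gmul (ginv x) x = gone;
  gmul_Vr : forall x, gmul x (ginv x) = gone
}.

Definition subset_of (G : Group) := G -> Prop.

Definition seteq {T : Type} (A B : T -> Prop) : Prop := forall x, A x <-> B x.

Definition is_subgroup (G : Group) (H : subset_of G) : Prop :=
  H (gone G) /\
  (forall x y, H x -> H y -> H (gmul G x y)) /\
  (forall x, H x -> H (ginv G x)).

Definition gen2 (G : Group) (A B : subset_of G) : subset_of G :=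
  fun x => forall H : subset_of G, is_subgroup G H ->
    (forall y, A y -> H y) -> (forall y, B y -> H y) -> H x.

Definition setmul (G : Group) (A B : subset_of G) : subset_of G :=
  fun x => exists a b, A a /\ B b /\ x = gmul G a b.

(* K_tau = intersection of K_{i}, i in tau; K_emptyset = G. *)
Definition Ktau (G : Group) (K : nat -> subset_of G) (tau : nat -> Prop) : subset_of G :=
  fun x => forall j, tau j -> K j x.

Definition subpred (A B : nat -> Prop) : Prop := forall i, A i -> B i.

Definition subgroup_geometry_system (G : Group) (I : nat -> Prop)
    (K : nat -> subset_of G) : Prop :=
  (forall tau tau' : nat -> Prop, subpred tau I -> subpred tau' I ->
     seteq (Ktau G K (fun j => tau j /\ tau' j))
           (gen2 G (Ktau G K tau) (Ktau G K tau'))) /\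
  (forall (tau : nat -> Prop) (i : nat), subpred tau I ->
     (exists k, I k /\ ~ tau k) -> I i -> ~ tau i ->
     seteq (setmul G (Ktau G K tau) (K i))
           (fun x => forall j, tau j -> setmul G (K j) (K i) x)) /\
  (forall i, I i -> ~ seteq (Ktau G K I) (Ktau G K (fun j => I j /\ j <> i))).

Definition prod_group (G1 G2 : Group) : Group.
Proof.
  refine {| carrier := (G1 * G2)%type;
            gmul := fun p q => (gmul G1 (fst p) (fst q), gmul G2 (snd p) (snd q));
            gone := (gone G1, gone G2);
            ginv := fun p => (ginv G1 (fst p), ginv G2 (snd p)) |}.
  - intros [] [] []; simpl; rewrite !gmul_assoc; reflexivity.
  - intros []; simpl; rewrite !gmul_1l; reflexivity.
  - intros []; simpl; rewrite !gmul_1r; reflexivity.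
  - intros []; simpl; rewrite !gmul_Vl; reflexivity.
  - intros []; simpl; rewrite !gmul_Vr; reflexivity.
Defined.

Definition setprod (G1 G2 : Group) (A : subset_of G1) (B : subset_of G2)
  : subset_of (prod_group G1 G2) :=
  fun p => A (fst p) /\ B (snd p).

Definition finite_nat_set (I : nat -> Prop) : Prop :=
  exists s : list nat, forall i, I i -> In i s.

(* Main.v *)
Require Import Defs.

Lemma Ktau_prod (G1 G2 : Group) (K1 : nat -> subset_of G1) (K2 : nat -> subset_of G2)
  (tau : nat -> Prop) (p : prod_group G1 G2) :
  Ktau (prod_group G1 G2) (fun i => setprod G1 G2 (K1 i) (K2 i)) tau p <->
  Ktau G1 K1 tau (fst p) /\ Ktau G2 K2 tau (snd p).
Proof.
  unfold Ktau, setprod; split.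
  - intros H; split; intros j Hj; apply (H j Hj).
  - intros [H1 H2] j Hj; split; auto.
Qed.

Lemma Ktau_sub (G : Group) (I : nat -> Prop) (K : nat -> subset_of G) tau :
  (forall i, I i -> is_subgroup G (K i)) -> subpred tau I -> is_subgroup G (Ktau G K tau).
Proof.
  intros HK Ht; unfold Ktau; repeat split.
  - intros j Hj; apply (HK j (Ht j Hj)).
  - intros x y Hx Hy j Hj; apply (HK j (Ht j Hj)); auto.
  - intros x Hx j Hj; apply (HK j (Ht j Hj)); auto.
Qed.

Lemma gen2_prod (G1 G2 : Group) (A1 B1 : subset_of G1) (A2 B2 : subset_of G2) p :
  A1 (gone G1) -> B1 (gone G1) -> A2 (gone G2) -> B2 (gone G2) ->
  (gen2 (prod_group G1 G2) (setprod G1 G2 A1 A2) (setprod G1 G2 B1 B2) p <->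
   gen2 G1 A1 B1 (fst p) /\ gen2 G2 A2 B2 (snd p)).
Proof.
  intros a1 b1 a2 b2; split.
  - intros H; split.
    + intros H1 [h1 [h2 h3]] HA HB.
      refine (H (fun q => H1 (fst q)) _ _ _).
      * repeat split; simpl; auto.
      * intros y [Hy _]; auto.
      * intros y [Hy _]; auto.
    + intros H1 [h1 [h2 h3]] HA HB.
      refine (H (fun q => H1 (snd q)) _ _ _).
      * repeat split; simpl; auto.
      * intros y [_ Hy]; auto.
      * intros y [_ Hy]; auto.
  - destruct p as [x y]; simpl; intros [Hx Hy] H [h1 [h2 h3]] HA HB.
    assert (E1 : H (x, gone G2)).
    { apply (Hx (fun u => H (u, gone G2))).
      - repeat split.
        + exact h1.
        + intros u v Hu Hv. pose proof (h2 _ _ Hu Hv) as W; simpl in W.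
          rewrite gmul_1l in W; exact W.
        + intros u Hu. pose proof (h3 _ Hu) as W; simpl in W.
          replace (ginv G2 (gone G2)) with (gone G2) in W; [exact W|].
          rewrite <- (gmul_1l G2 (ginv G2 (gone G2))). symmetry; apply gmul_Vr.
      - intros u Hu; apply HA; split; simpl; auto.
      - intros u Hu; apply HB; split; simpl; auto. }
    assert (E2 : H (gone G1, y)).
    { apply (Hy (fun u => H (gone G1, u))).
      - repeat split.
        + exact h1.
        + intros u v Hu Hv. pose proof (h2 _ _ Hu Hv) as W; simpl in W.
          rewrite gmul_1l in W; exact W.
        + intros u Hu. pose proof (h3 _ Hu) as W; simpl in W.
          replace (ginv G1 (gone G1)) with (gone G1) in W; [exact W|].
          rewrite <- (gmul_1l G1 (ginv G1 (gone G1))). symmetry; apply gmul_Vr.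
      - intros u Hu; apply HA; split; simpl; auto.
      - intros u Hu; apply HB; split; simpl; auto. }
    pose proof (h2 _ _ E1 E2) as W; simpl in W.
    rewrite gmul_1r, gmul_1l in W; exact W.
Qed.

Theorem mainTheorem12 (I : nat -> Prop) (G1 G2 : Group)
    (K1 : nat -> subset_of G1) (K2 : nat -> subset_of G2) :
  finite_nat_set I ->
  (forall i, I i -> is_subgroup G1 (K1 i)) ->
  (forall i, I i -> is_subgroup G2 (K2 i)) ->
  subgroup_geometry_system G1 I K1 ->
  subgroup_geometry_system G2 I K2 ->
  subgroup_geometry_system (prod_group G1 G2) I
    (fun i => setprod G1 G2 (K1 i) (K2 i)).
Proof.
  intros _ HK1 HK2 [A1 [A2 A3]] [B1 [B2 B3]]; split; [|split].
  - intros tau tau' Ht Ht' p.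
    rewrite Ktau_prod.
    assert (S1 := Ktau_sub G1 I K1 tau HK1 Ht).
    assert (S1' := Ktau_sub G1 I K1 tau' HK1 Ht').
    assert (S2 := Ktau_sub G2 I K2 tau HK2 Ht).
    assert (S2' := Ktau_sub G2 I K2 tau' HK2 Ht').
    rewrite (A1 tau tau' Ht Ht' (fst p)), (B1 tau tau' Ht Ht' (snd p)).
    assert (Hs : seteq (Ktau (prod_group G1 G2) (fun i => setprod G1 G2 (K1 i) (K2 i)) tau)
                       (setprod G1 G2 (Ktau G1 K1 tau) (Ktau G2 K2 tau))).
    { intro q; rewrite Ktau_prod; reflexivity. }
    assert (Hs' : seteq (Ktau (prod_group G1 G2) (fun i => setprod G1 G2 (K1 i) (K2 i)) tau')
                       (setprod G1 G2 (Ktau G1 K1 tau') (Ktau G2 K2 tau'))).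
    { intro q; rewrite Ktau_prod; reflexivity. }
    rewrite <- gen2_prod by (apply S1 || apply S1' || apply S2 || apply S2').
    unfold gen2; split; intros H Hg Hsub HA HB; apply H; auto;
      intros y Hy;
      first [exact (HA y (proj1 (Hs y) Hy)) | exact (HA y (proj2 (Hs y) Hy))
            | exact (HB y (proj1 (Hs' y) Hy)) | exact (HB y (proj2 (Hs' y) Hy))].
  - intros tau i Ht Hk Hi Hni [x y].
    split.
    + intros [a [b [Ha [Hb E]]]].
      apply Ktau_prod in Ha. destruct a as [a1 a2], b as [b1 b2]; simpl in *.
      destruct Ha as [Ha1 Ha2], Hb as [Hb1 Hb2].
      injection E as E1 E2.
      assert (C1 : setmul G1 (Ktau G1 K1 tau) (K1 i) x) by (exists a1, b1; auto).
      assert (C2 : setmul G2 (Ktau G2 K2 tau) (K2 i) y) by (exists a2, b2; auto).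
      pose proof (proj1 (A2 tau i Ht Hk Hi Hni x) C1) as C1'; clear C1; rename C1' into C1.
      pose proof (proj1 (B2 tau i Ht Hk Hi Hni y) C2) as C2'; clear C2; rename C2' into C2.
      intros j Hj.
      destruct (C1 j Hj) as [c1 [d1 [Hc1 [Hd1 F1]]]].
      destruct (C2 j Hj) as [c2 [d2 [Hc2 [Hd2 F2]]]].
      exists (c1, c2), (d1, d2); simpl; unfold setprod; simpl.
      subst; repeat split; auto. rewrite <- F1, <- F2; reflexivity.
    + intros H.
      assert (C1 : setmul G1 (Ktau G1 K1 tau) (K1 i) x).
      { apply (proj2 (A2 tau i Ht Hk Hi Hni x)). intros j Hj.
        destruct (H j Hj) as [[c1 c2] [[d1 d2] [[Hc1 _] [[Hd1 _] F]]]].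
        injection F as F1 F2. exists c1, d1; auto. }
      assert (C2 : setmul G2 (Ktau G2 K2 tau) (K2 i) y).
      { apply (proj2 (B2 tau i Ht Hk Hi Hni y)). intros j Hj.
        destruct (H j Hj) as [[c1 c2] [[d1 d2] [[_ Hc2] [[_ Hd2] F]]]].
        injection F as F1 F2. exists c2, d2; auto. }
      destruct C1 as [a1 [b1 [Ha1 [Hb1 E1]]]].
      destruct C2 as [a2 [b2 [Ha2 [Hb2 E2]]]].
      exists (a1, a2), (b1, b2). split; [apply Ktau_prod; simpl; auto|].
      split; [split; simpl; auto|]. simpl; subst; reflexivity.
  - intros i Hi Heq. apply (A3 i Hi). intro x.
    assert (Hone : forall tau, subpred tau I -> Ktau G2 K2 tau (gone G2)).
    { intros tau Ht; apply (Ktau_sub G2 I K2 tau HK2 Ht). }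
    pose proof (Heq (x, gone G2)) as W.
    rewrite !Ktau_prod in W; simpl in W.
    split; intro Hx.
    + apply W; split; auto. apply Hone; intros j Hj; auto.
    + apply W; split; auto. apply Hone; intros j [Hj _]; auto.
Qed.
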